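(* Let $n\ge 1$, let $(p_1,\dots,p_n)$ be a probability vector (i.e. $p_i\ge 0$ and $\sum_{i=1}^n p_i=1$), and let $\beta>0$. Let $n_0$ be the number of indices $i$ with $p_i=0$, and let $p_1',\dots,p_{n-n_0}'$ denote the strictly positive entries among $p_1,\dots,p_n$. Define the R\'enyi entropy of order $\beta$ (for $\beta\neq 1$) by \[ {_\beta}H_n(p_1,\dots,p_n)=(1-\beta)^{-1}\log_2\sum_{i=1}^n p_i^\beta . \] Then: \begin{enumerate} \item if $0<\beta<1$, \[ {_\beta}H_n(p_1,\dots,p_n)\ \ge\ (1-\beta)^{-1}\Big(\log_2(n-n_0)+\frac{\beta}{n-n_0}\sum_{i=1}^{n-n_0}\log_2 p_i'\Big); \] \item if $\beta>1$, \[ {_\beta}H_n(p_1,\dots,p_n)\ \le\ (1-\beta)^{-1}\Big(\log_2(n-n_0)+\frac{\beta}{n-n_0}\sum_{i=1}^{n-n_0}\log_2 p_i'\Big). \] \end{enumerate}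
   Context: Convention: $0^\beta=0$ for $\beta>0$. *)

(* Defs.v *)
(* R : realType, powR (a `^ x) with 0 `^ b = 0 for b != 0. *)
From mathcomp Require Import all_boot all_order all_algebra.
From mathcomp Require Import all_classical all_reals all_analysis.
Set Implicit Arguments. Unset Strict Implicit. Unset Printing Implicit Defensive.
Import Order.TTheory GRing.Theory Num.Theory.
Local Open Scope ring_scope.

Definition log2 {R : realType} (x : R) : R := ln x / ln 2.

Definition renyi {R : realType} (n : nat) (b : R) (p : 'I_n -> R) : R :=
  (1 - b)^-1 * log2 (\sum_(i < n) p i `^ b).

Definition nzero {R : realType} (n : nat) (p : 'I_n -> R) : nat :=
  #|[set i : 'I_n | p i == 0]|.

Definition renyi_bound {R : realType} (n : nat) (b : R) (p : 'I_n -> R) : R :=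
  (1 - b)^-1 * (log2 (n - nzero p)%:R
     + b / (n - nzero p)%:R * \sum_(i < n | 0 < p i) log2 (p i)).

(* Main.v *)
Require Import Defs.
From mathcomp Require Import all_boot all_order all_algebra.
From mathcomp Require Import all_classical all_reals all_analysis.
From mathcomp Require Import ring lra zify.
Import Order.TTheory GRing.Theory Num.Theory.
Local Open Scope ring_scope.
Lemma ln_avg (R : realType) (I : finType) (P : pred I) (x : I -> R) :
  (0 < #|P|)%N -> (forall i, P i -> 0 < x i) ->
  \sum_(i | P i) ln (x i) <= #|P|%:R * ln ((\sum_(i | P i) x i) / #|P|%:R).
Proof.
move=> m0 xP.
set m := #|P|%:R.
have m0' : 0 < m by rewrite ltr0n.
have S0 : 0 < \sum_(i | P i) x i.
  have [i Pi] : exists i, P i by move/card_gt0P: m0 => [i Pi]; exists i.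
  rewrite (bigD1 i) //=; apply: ltr_pwDl; first exact: xP.
  by apply: sumr_ge0 => j /andP[Pj _]; apply/ltW/xP.
set A := (\sum_(i | P i) x i) / m.
have A0 : 0 < A by apply: divr_gt0.
have key : forall i, P i -> ln (x i) - ln A <= x i / A - 1.
  move=> i Pi.
  rewrite -ln_div ?posrE ?xP //.
  have := @le_ln1Dx R (x i / A - 1).
  rewrite addrCA subrr addr0; apply.
  by rewrite ltrBrDl subrr divr_gt0 ?xP.
have : \sum_(i | P i) (ln (x i) - ln A) <= \sum_(i | P i) (x i / A - 1).
  exact: ler_sum.
rewrite !big_split /= !sumrN -!mulr_suml !sumr_const.
have -> : (\sum_(i | P i) x i) / A = m.
  rewrite /A invfM invrK mulrA mulfV ?mul1r //; exact: lt0r_neq0.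
rewrite -[1 *+ _]/m -mulr_natr -/m.
by rewrite subrr subr_le0 mulrC.
Qed.

Theorem mainTheorem1 (R : realType) (n : nat) (p : 'I_n -> R) (b : R) :
  (1 <= n)%N ->
  (forall i, 0 <= p i) -> \sum_(i < n) p i = 1 ->
  0 < b ->
  (b < 1 -> renyi_bound b p <= renyi b p) /\
  (1 < b -> renyi b p <= renyi_bound b p).
Proof.
move=> n1 p0 p1 b0.
set P := [pred i : 'I_n | 0 < p i].
have hS : \sum_(i < n) p i `^ b = \sum_(i | P i) p i `^ b.
  rewrite (bigID P) /= [X in _ + X]big1 ?addr0 // => i; rewrite ?inE /= => Hi.
  have -> : p i = 0 by apply/eqP; rewrite eq_le p0 andbT leNgt.
  by rewrite powR0 // gt_eqF.
have hm : (n - nzero p)%N = #|P|.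
  have HC : (#|[set i : 'I_n | p i == 0%R]| + #|P| = n)%N.
    have HC' := cardC P; rewrite card_ord in HC'.
    rewrite -[X in (_ = X)%N]HC' addnC; congr (_ + _)%N.
    apply: eq_card => i; rewrite !inE /=.
    by rewrite lt_def p0 andbT negbK.
  rewrite /nzero; lia.
have m0 : (0 < #|P|)%N.
  case: (pickP P) => [i Pi|H]; first by apply/card_gt0P; exists i.
  have : \sum_(i < n) p i = 0.
    apply: big1 => i _; have := H i; rewrite /= => /negbT Hi.
    by apply/eqP; rewrite eq_le p0 andbT leNgt.
  by rewrite p1 => /eqP; rewrite oner_eq0.
have xP : forall i, P i -> 0 < p i `^ b by move=> i Pi; apply: powR_gt0.
have key := ln_avg _ _ _ _ m0 xP.
set S := \sum_(i | P i) p i `^ b in key.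
set T := \sum_(i < n | 0 < p i) ln (p i).
set m := #|P|%:R in key.
have mpos : 0 < m by rewrite ltr0n.
have Spos : 0 < S.
  case/card_gt0P: m0 => j Pj.
  rewrite /S (bigD1 j) //=; apply: ltr_pwDl; first exact: xP.
  by apply: sumr_ge0 => k /andP[Pk _]; apply/ltW/xP.
have key2 : b * T <= m * (ln S - ln m).
  rewrite -ln_div ?posrE // /T mulr_sumr.
  apply: le_trans key; rewrite le_eqVlt; apply/orP; left; apply/eqP.
  by apply: eq_bigr => i _; rewrite ln_powR.
have D : ln m + b / m * T <= ln S.
  rewrite -subr_ge0.
  have -> : ln S - (ln m + b / m * T) = m^-1 * (m * (ln S - ln m) - b * T).
    by field; rewrite gt_eqF.
  by apply: mulr_ge0; [rewrite invr_ge0 ltW | rewrite subr_ge0].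
have l2 : 0 < ln (2 : R) by apply: ln_gt0; rewrite ltr1n.
rewrite /renyi /renyi_bound /log2 hS hm -mulr_suml -/T -/S -/m.
have -> : ln m / ln 2 + b / m * (T / ln 2) = (ln m + b / m * T) / ln 2.
  by rewrite mulrDl mulrA.
split => hb.
  apply: ler_wpM2l; first by rewrite invr_ge0 subr_ge0 ltW.
  by apply: ler_wpM2r => //; rewrite invr_ge0 ltW.
apply: ler_wnM2l; first by rewrite invr_le0 subr_le0 ltW.
by apply: ler_wpM2r => //; rewrite invr_ge0 ltW.
Qed.
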